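(* Each of the following mixed extensions of $P_3$ is pseudo-cospectral with a graph in $\mathcal G''$ not isomorphic to it: (i) the mixed extension of type $(p,-q,p)$ is pseudo-cospectral with $K_p+CS_{p,2q}$, where $p\ge 2$, $q\ge 1$; (ii) the mixed extension of type $(p,(p-1)(p-2),p)$ is pseudo-cospectral with $K_{p(p-1)}+K_{p-1,p-1}$, where $p\ge 3$; (iii) the mixed extension of type $(p,q,p)$ is pseudo-cospectral with $K_p+CS_{p+q-1,r}$, where $p\ge 2$, $q\ge 1$ and $r=1+pq/(p+q-1)$ is an integer.
   Context: Let $P_3$ be the path with vertices $1,2,3$ and edges $\{1,2\},\{2,3\}$. For nonzero integers $t_1,t_2,t_3$, the mixed extension of $P_3$ of type $(t_1,t_2,t_3)$ is the graph whose vertex set is a disjoint union $V_1\cup V_2\cup V_3$ with $|V_i|=|t_i|$, where $V_i$ is a clique if $t_i>0$ and a coclique if $t_i<0$, every vertex of $V_2$ is adjacent to every vertex of $V_1\cup V_3$, and there are no edges between $V_1$ and $V_3$. $K_n$ denotes the complete graph, $K_{a,b}$ the complete bipartite graph, and $CS_{a,b}$ (complete split graph) denotes the complete graph $K_{a+b}$ from which the edges of a complete subgraph $K_b$ are deleted (so it has a clique of order $a$ and a coclique of order $b$, all joined). $G_1+G_2$ denotes the disjoint union. All spectra are adjacency spectra. $\mathcal G''$ is the class of graphs with no isolated vertices such that all but at most three adjacency eigenvalues are equal to $0$ or $-1$, and which have exactly two positive eigenvalues and exactly one eigenvalue less than $-1$. Every graph in $\mathcal G''$ on $n$ vertices has characteristic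 polynomial of the form $(x^3-bx^2-cx+d)(x+1)^b x^{n-b-3}$ with $b\ge 0$, $d>0$; two graphs in $\mathcal G''$ are called pseudo-cospectral if they have the same coefficients $b,c,d$, i.e. the same multiset of nonzero adjacency eigenvalues (possibly with different numbers of vertices). *)

(* Defs.v *)
From HB Require Import structures.
From mathcomp Require Import all_boot all_order all_algebra.
From mathcomp Require Import algC.
Set Implicit Arguments. Unset Strict Implicit. Unset Printing Implicit Defensive.
Import Order.TTheory GRing.Theory Num.Theory.
Local Open Scope ring_scope.

Record sgraph := SGraph {
  vert : finType;
  adj : rel vert;
  adj_sym : symmetric adj;
  adj_irr : irreflexive adj }.
Arguments adj : clear implicits.

Definition isomorphic (G H : sgraph) : Prop :=
  exists f : vert G -> vert H,
    bijective f /\ forall x y, adj H (f x) (f y) = adj G x y.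

Definition adjmx (G : sgraph) : 'M[algC]_#|vert G| :=
  \matrix_(i, j) (adj G (enum_val i) (enum_val j))%:R.

Definition spectrum (G : sgraph) (rs : seq algC) : Prop :=
  char_poly (adjmx G) = \prod_(z <- rs) ('X - z%:P).

Definition in_Gpp (G : sgraph) : Prop :=
  (forall x : vert G, exists y, adj G x y) /\
  exists rs, [/\ spectrum G rs,
     leq (count (fun z => (z != 0) && (z != -1)) rs) 3,
     count (fun z => 0 < z) rs = 2%N &
     count (fun z => z < -1) rs = 1%N].

Definition pseudo_cospectral (G H : sgraph) : Prop :=
  [/\ in_Gpp G, in_Gpp H &
   exists rs1 rs2, [/\ spectrum G rs1, spectrum H rs2 &
      perm_eq [seq z <- rs1 | z != 0] [seq z <- rs2 | z != 0]]].

Definition K_adj n : rel 'I_n := fun i j => i != j.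
Lemma K_sym n : symmetric (@K_adj n). Proof. by move=> i j; rewrite /K_adj eq_sym. Qed.
Lemma K_irr n : irreflexive (@K_adj n). Proof. by move=> i; rewrite /K_adj eqxx. Qed.
Definition K n := SGraph (@K_sym n) (@K_irr n).

Definition Kb_adj a b : rel ('I_a + 'I_b)%type := fun x y =>
  match x, y with inl _, inr _ | inr _, inl _ => true | _, _ => false end.
Lemma Kb_sym a b : symmetric (@Kb_adj a b). Proof. by case=> i; case. Qed.
Lemma Kb_irr a b : irreflexive (@Kb_adj a b). Proof. by case. Qed.
Definition Kb a b := SGraph (@Kb_sym a b) (@Kb_irr a b).

Definition CS_adj a b : rel ('I_a + 'I_b)%type := fun x y =>
  match x, y with
  | inl i, inl j => i != j
  | inl _, inr _ | inr _, inl _ => true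
  | inr _, inr _ => false end.
Lemma CS_sym a b : symmetric (@CS_adj a b).
Proof. by case=> i; case=> j //=; rewrite eq_sym. Qed.
Lemma CS_irr a b : irreflexive (@CS_adj a b). Proof. by case=> i //=; rewrite eqxx. Qed.
Definition CS a b := SGraph (@CS_sym a b) (@CS_irr a b).

Definition dunion_adj (G H : sgraph) : rel (vert G + vert H)%type := fun x y =>
  match x, y with
  | inl i, inl j => adj G i j
  | inr i, inr j => adj H i j
  | _, _ => false end.
Lemma dunion_sym G H : symmetric (@dunion_adj G H).
Proof. by case=> i; case=> j //=; rewrite adj_sym. Qed.
Lemma dunion_irr G H : irreflexive (@dunion_adj G H).
Proof. by case=> i //=; rewrite adj_irr. Qed.
Definition dunion G H := SGraph (@dunion_sym G H) (@dunion_irr G H).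

(* mixed extension of P_3 of type (t1,t2,t3): V_i has |t_i| vertices,
   clique if t_i > 0, coclique if t_i < 0; V_2 joined to V_1 and V_3;
   no edges between V_1 and V_3. *)
Definition mext_adj (t1 t2 t3 : int) :
  rel ('I_(absz t1) + 'I_(absz t2) + 'I_(absz t3))%type := fun x y =>
  match x, y with
  | inl (inl i), inl (inl j) => (0 < t1) && (i != j)
  | inl (inr i), inl (inr j) => (0 < t2) && (i != j)
  | inr i, inr j => (0 < t3) && (i != j)
  | inl (inr _), _ => true
  | _, inl (inr _) => true
  | _, _ => false
  end.
Lemma mext_sym t1 t2 t3 : symmetric (@mext_adj t1 t2 t3).
Proof. by case=> [[i|i]|i] [[j|j]|j] //=; rewrite eq_sym. Qed.
Lemma mext_irr t1 t2 t3 : irreflexive (@mext_adj t1 t2 t3).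
Proof. by case=> [[i|i]|i] //=; rewrite eqxx andbF. Qed.
Definition mixed_ext t1 t2 t3 := SGraph (@mext_sym t1 t2 t3) (@mext_irr t1 t2 t3).

(* Main.v *)
Require Import Defs.
From HB Require Import structures.
From mathcomp Require Import all_boot all_order all_algebra.
From mathcomp Require Import algC.
From mathcomp Require Import ring zify.
Set Implicit Arguments. Unset Strict Implicit. Unset Printing Implicit Defensive.
Import Order.TTheory GRing.Theory Num.Theory.
Local Open Scope ring_scope.

Lemma sylvester (R : comNzRingType) n k (P : 'M[R]_(n, k)) (Q : 'M[R]_(k, n)) :
  \det (1%:M - P *m Q) = \det (1%:M - Q *m P).
Proof.
pose B := block_mx (1%:M : 'M[R]_n) P Q (1%:M : 'M[R]_k).
have e1 : B *m block_mx 1%:M (- P) 0 1%:M = block_mx 1%:M 0 Q (1%:M - Q *m P).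
  rewrite mulmx_block !mulmx1 !mul1mx !mulmx0 !addr0 mulmxN.
  by rewrite addrC subrr addrC.
have e2 : block_mx 1%:M (- P) 0 1%:M *m B = block_mx (1%:M - P *m Q) 0 Q 1%:M.
  rewrite mulmx_block !mulmx1 !mul1mx !mul0mx !add0r mulNmx.
  by rewrite subrr addrC.
have h1 := congr1 determinant e1; have h2 := congr1 determinant e2.
rewrite !det_mulmx det_lblock det_ublock !det1 mulr1 in h1.
rewrite !det_mulmx det_lblock det_ublock !det1 mul1r mulr1 in h2.
by rewrite -h2 mul1r -[LHS]mulr1 h1 mul1r.
Qed.


Lemma sum_enum (T : finType) (F : T -> algC) :
  \sum_(i < #|T|) F (enum_val i) = \sum_v F v.
Proof. by rewrite -(big_enum_val F); apply: eq_bigl. Qed.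
Lemma prod_enum (T : finType) (F : T -> algC) :
  \prod_(i < #|T|) F (enum_val i) = \prod_v F v.
Proof. by rewrite -(big_enum_val F); apply: eq_bigl. Qed.

Section Cells.
Variables (T : finType) (k : nat) (cell : T -> 'I_k) (C : 'M[algC]_k)
  (eps : 'I_k -> algC) (A : T -> T -> algC).
Hypothesis hA : forall v w, A v w = C (cell v) (cell w) - (v == w)%:R * eps (cell v).

Definition nc c := #|[pred v | cell v == c]|.

Lemma det_cells (x : algC) : (forall c, x + eps c != 0) ->
  \det (x%:M - \matrix_(i, j) A (enum_val i) (enum_val j) : 'M_#|T|) =
  (\prod_c (x + eps c) ^+ nc c) *
  \det (1%:M - C *m diag_mx (\row_c ((nc c)%:R / (x + eps c)))).
Proof.
move=> hx.
pose U : 'M[algC]_(#|T|, k) := \matrix_(i, c) ((cell (enum_val i) == c)%:R).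
pose d := \row_(i < #|T|) (x + eps (cell (enum_val i))).
pose di := \row_(i < #|T|) (x + eps (cell (enum_val i)))^-1.
have hW : U *m C *m U^T = \matrix_(i,j) C (cell (enum_val i)) (cell (enum_val j)).
  apply/matrixP=> i j; rewrite !mxE (bigD1 (cell (enum_val j))) //= big1 => [|c hc].
    rewrite !mxE eqxx mulr1 addr0 (bigD1 (cell (enum_val i))) //= big1 => [|c hc].
      by rewrite !mxE eqxx mul1r addr0.
    by rewrite !mxE eq_sym (negbTE hc) mul0r.
  by rewrite !mxE eq_sym (negbTE hc) mulr0.
have hM : x%:M - \matrix_(i, j) A (enum_val i) (enum_val j) = diag_mx d - U *m C *m U^T.
  apply/matrixP => i j; rewrite hW !mxE hA (inj_eq enum_val_inj).
  case: eqP => [->|_]; rewrite /= ?mulr1n ?mulr0n ?mul1r ?mul0r; ring.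
have hD : diag_mx d *m diag_mx di = 1%:M.
  rewrite mulmx_diag; apply/matrixP => i j; rewrite !mxE.
  by case: eqP => [->|_]; rewrite ?mulr1n ?mulr0n // mulfV.
have -> : x%:M - \matrix_(i, j) A (enum_val i) (enum_val j) =
   diag_mx d *m (1%:M - (diag_mx di *m U) *m (C *m U^T)).
  by rewrite hM mulmxBr mulmx1 !mulmxA hD mul1mx.
rewrite det_mulmx sylvester -mulmxA.
have -> : U^T *m (diag_mx di *m U) = diag_mx (\row_c ((nc c)%:R / (x + eps c))).
  rewrite mul_diag_mx; apply/matrixP => a b; rewrite !mxE.
  under eq_bigr do rewrite !mxE.
  rewrite (sum_enum (fun v => (cell v == a)%:R * ((x + eps (cell v))^-1 * (cell v == b)%:R))).
  case: eqP => [<-|/eqP hab]; last first.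
    rewrite mulr0n big1 // => v _; case: eqP => [->|_]; last by rewrite mul0r.
    by rewrite (negbTE hab) !mulr0.
  rewrite mulr1n (bigID (fun v => cell v == a)) /= addrC big1 ?add0r => [|v /negbTE ->]; last by rewrite mul0r.
  rewrite (eq_bigr (fun _ => (x + eps a)^-1)) => [|v /eqP ->]; last by rewrite eqxx mulr1 mul1r.
  rewrite sumr_const /nc mulrC mulr_natr; congr (_ *+ _); exact: eq_card.
congr (_ * _).
rewrite det_diag; under eq_bigr do rewrite mxE.
rewrite (prod_enum (fun v => x + eps (cell v))) (partition_big cell xpredT) //=.
apply: eq_bigr => c _.
rewrite (eq_bigr (fun _ => x + eps c)) => [|v /eqP -> //].
by rewrite prodr_const.
Qed.

Lemma det_cells2 (x : algC) : (forall c, x + eps c != 0) -> (forall c, 0 < nc c)%N ->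
  \det (x%:M - \matrix_(i, j) A (enum_val i) (enum_val j) : 'M_#|T|) =
  (\prod_c (x + eps c) ^+ (nc c).-1) *
  \det (diag_mx (\row_c (x + eps c)) - C *m diag_mx (\row_c (nc c)%:R)).
Proof.
move=> hx hn; rewrite det_cells //.
have -> : \prod_c (x + eps c) ^+ nc c =
   (\prod_c (x + eps c) ^+ (nc c).-1) * \det (diag_mx (\row_c (x + eps c))).
  rewrite det_diag -big_split /=; apply: eq_bigr => c _.
  by rewrite mxE -exprSr prednK.
rewrite -mulrA [X in _ * X]mulrC -det_mulmx mulmxBl mul1mx -mulmxA mulmx_diag.
have -> : \row_j ((\row_c ((nc c)%:R / (x + eps c))) 0 j * (\row_c (x + eps c)) 0 j)
  = \row_c (nc c)%:R :> 'rV_k by apply/rowP => c; rewrite !mxE divfK.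
by [].
Qed.
End Cells.

Lemma horner_char_poly n (M : 'M[algC]_n) x : (char_poly M).[x] = \det (x%:M - M).
Proof.
rewrite /char_poly -[LHS]/(horner_eval x _) -det_map_mx; f_equal.
apply/matrixP => i j; rewrite !mxE /horner_eval.
rewrite -[LHS]/(('X *+ (i == j) - (M i j)%:P).[x]).
by rewrite hornerD hornerN hornerC hornerMn hornerX.
Qed.

Lemma poly_eq_nat (p q : {poly algC}) :
  (forall i : nat, p.[i.+1%:R] = q.[i.+1%:R]) -> p = q.
Proof.
move=> h; apply/eqP; rewrite -subr_eq0; apply/negPn/negP => hpq.
pose rs : seq algC := [seq i.+1%:R | i <- iota 0 (size (p - q))].
have h1 : all (root (p - q)) rs.
  by apply/allP => z /mapP [i _ ->]; rewrite /root hornerD hornerN h subrr.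
have h2 : uniq rs.
  rewrite map_inj_uniq ?iota_uniq // => i j /eqP; rewrite eqr_nat eqSS => /eqP.
  by [].
have := max_poly_roots hpq h1 h2.
by rewrite size_map size_iota ltnn.
Qed.
Lemma det33 (R : comNzRingType) (M : 'M[R]_3) :
  \det M = M 0 0 * (M 1 1 * M 2 2 - M 1 2 * M 2 1)
         - M 0 1 * (M 1 0 * M 2 2 - M 1 2 * M 2 0)
         + M 0 2 * (M 1 0 * M 2 1 - M 1 1 * M 2 0).
Proof.
pose f := fun a b : nat => M (inord a) (inord b).
have -> : M = \matrix_(i, j) f (val i) (val j).
  by apply/matrixP=> i j; rewrite mxE /f !inord_val.
rewrite (expand_det_row _ 0) !big_ord_recl big_ord0 /cofactor.
rewrite !(expand_det_row _ 0) !big_ord_recl !big_ord0 /cofactor !det_mx11 !mxE /=.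
rewrite !expr0 !expr1 ?expr2; ring.
Qed.
Lemma quad_roots (S T : nat) : (S.+1 < T)%N ->
  exists r1 r2 : algC, [/\ r1 + r2 = S%:R, r1 * r2 = - T%:R, 0 < r1 & r2 < -1].
Proof.
move=> hST.
pose w : algC := sqrtC (S ^ 2 + 4 * T)%N%:R.
have hw2 : w ^+ 2 = (S ^ 2 + 4 * T)%N%:R by rewrite sqrtCK.
have h2 : (2 : algC) != 0 by rewrite pnatr_eq0.
have hs2 : S%:R + 2 < w.
  have -> : (S%:R + 2 : algC) = sqrtC ((S + 2) ^ 2)%N%:R.
    by rewrite natrX sqrCK ?ler0n // natrD.
  rewrite ltr_sqrtC ?qualifE /= ?ler0n // ltr_nat; nia.
have hw0 : 0 <= w by rewrite sqrtC_ge0 ler0n.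
exists ((S%:R + w) / 2), ((S%:R - w) / 2); split.
- by field.
- have h4 : (4 : algC) != 0 by rewrite pnatr_eq0.
  transitivity ((S%:R ^+ 2 - w ^+ 2) / 4); first by field.
  rewrite hw2 natrD natrM natrX; by field.
- apply: divr_gt0; last by rewrite ltr0n.
  have hwp : 0 < w by apply: le_lt_trans hs2; rewrite addr_ge0 ?ler0n.
  by rewrite -(addr0 0) ler_ltD // ler0n.
- rewrite -subr_gt0.
  have -> : -1 - (S%:R - w) / 2 = (w - (S%:R + 2)) / 2 :> algC by field.
  by apply: divr_gt0; rewrite ?subr_gt0 ?ltr0n.
Qed.

Lemma Gpp_of (G : sgraph) a b (mu r1 r2 : algC) :
  (forall x, exists y, adj G x y) ->
  spectrum G (nseq a (-1) ++ nseq b 0 ++ [:: mu; r1; r2]) ->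
  0 < mu -> 0 < r1 -> r2 < -1 -> in_Gpp G.
Proof.
move=> hG hs hmu hr1 hr2; split=> //; exists (nseq a (-1) ++ nseq b 0 ++ [:: mu; r1; r2]).
have hr20 : r2 < 0 := lt_trans hr2 (@ltrN10 _).
split=> //; rewrite !count_cat !count_nseq /=.
- rewrite eqxx andbF mul0n add0n eqxx /= mul0n add0n addn0.
  by case: ((mu != 0) && _); case: ((r1 != 0) && _); case: ((r2 != 0) && _).
- rewrite oppr_gt0 ltr10 ltxx hmu hr1 (lt_gtF hr20) /=.
  by rewrite mul0n.
- rewrite ltxx (lt_gtF (@ltrN10 _)) (lt_gtF (lt_trans (@ltrN10 _) hmu)).
  by rewrite (lt_gtF (lt_trans (@ltrN10 _) hr1)) hr2 !mul0n.
Qed.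

Lemma pc_of (G H : sgraph) a bG bH (mu r1 r2 : algC) :
  (forall x, exists y, adj G x y) -> (forall x, exists y, adj H x y) ->
  spectrum G (nseq a (-1) ++ nseq bG 0 ++ [:: mu; r1; r2]) ->
  spectrum H (nseq a (-1) ++ nseq bH 0 ++ [:: mu; r1; r2]) ->
  0 < mu -> 0 < r1 -> r2 < -1 -> pseudo_cospectral G H.
Proof.
move=> hG hH sG sH hmu hr1 hr2; split; first exact: (Gpp_of hG sG).
  exact: (Gpp_of hH sH).
exists (nseq a (-1) ++ nseq bG 0 ++ [:: mu; r1; r2]), (nseq a (-1) ++ nseq bH 0 ++ [:: mu; r1; r2]).
split=> //; rewrite !filter_cat !filter_nseq /= eqxx !mul0n.
by [].
Qed.

Lemma prod_nseq n (z x : algC) : \prod_(y <- nseq n z) (x - y) = (x - z) ^+ n.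
Proof. by elim: n => [|n IH]; rewrite ?big_nil ?expr0 // big_cons IH exprS. Qed.

Lemma spectrum_cells (G : sgraph) k (cell : vert G -> 'I_k) (C : 'M[algC]_k) eps rs :
  (forall v w, (adj G v w)%:R = C (cell v) (cell w) - (v == w)%:R * eps (cell v) :> algC) ->
  (forall c, eps c = 0 \/ eps c = 1) ->
  (forall c, 0 < nc cell c)%N ->
  (forall x : algC, (forall c, x + eps c != 0) ->
     (\prod_c (x + eps c) ^+ (nc cell c).-1) *
     \det (diag_mx (\row_c (x + eps c)) - C *m diag_mx (\row_c (nc cell c)%:R))
     = \prod_(z <- rs) (x - z)) ->
  spectrum G rs.
Proof.
move=> hA he hn hx; rewrite /spectrum; apply: poly_eq_nat => i.
rewrite horner_char_poly horner_prod.
under eq_bigr do rewrite hornerXsubC.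
have hx' : forall c, i.+1%:R + eps c != 0.
  by move=> c; case: (he c) => ->; rewrite ?addr0 ?natr1 pnatr_eq0.
rewrite -(hx _ hx').
exact: (det_cells2 (A := fun v w => (adj G v w)%:R)).
Qed.

Definition m3 (l : seq (seq algC)) : 'M[algC]_3 := \matrix_(i, j) nth 0 (nth [::] l i) j.
Definition cellL a b c (v : ('I_a + 'I_b) + 'I_c) : 'I_3 :=
  match v with inl (inl _) => 0 | inl (inr _) => 1 | inr _ => 2 end.
Definition cellR a b c (v : 'I_a + ('I_b + 'I_c)) : 'I_3 :=
  match v with inl _ => 0 | inr (inl _) => 1 | inr (inr _) => 2 end.

Lemma sum1_true n (P : pred 'I_n) : (forall i, P i) -> (\sum_(i < n | P i) 1 = n)%N.
Proof. by move=> h; rewrite sum1_card (eq_card (B := predT)) ?card_ord. Qed.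
Lemma sum1_false n (P : pred 'I_n) : (forall i, ~~ P i) -> (\sum_(i < n | P i) 1 = 0)%N.
Proof. by move=> h; rewrite big1_idem //= => i hi; move: (h i); rewrite hi. Qed.

Lemma ncL a b c : [/\ nc (@cellL a b c) 0 = a, nc (@cellL a b c) 1 = b & nc (@cellL a b c) 2 = c].
Proof.
rewrite /nc -!sum1_card !big_sumType /=.
split.
- by rewrite (sum1_true (n:=a)) ?(sum1_false (n:=b)) ?(sum1_false (n:=c)) ?addn0 ?add0n // => i; rewrite inE.
- by rewrite (sum1_false (n:=a)) ?(sum1_true (n:=b)) ?(sum1_false (n:=c)) ?addn0 ?add0n // => i; rewrite inE.
- by rewrite (sum1_false (n:=a)) ?(sum1_false (n:=b)) ?(sum1_true (n:=c)) ?addn0 ?add0n // => i; rewrite inE.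
Qed.

Lemma ncR a b c : [/\ nc (@cellR a b c) 0 = a, nc (@cellR a b c) 1 = b & nc (@cellR a b c) 2 = c].
Proof.
rewrite /nc -!sum1_card !big_sumType /=.
split.
- by rewrite (sum1_true (n:=a)) ?(sum1_false (n:=b)) ?(sum1_false (n:=c)) ?addn0 ?add0n // => i; rewrite inE.
- by rewrite (sum1_false (n:=a)) ?(sum1_true (n:=b)) ?(sum1_false (n:=c)) ?addn0 ?add0n // => i; rewrite inE.
- by rewrite (sum1_false (n:=a)) ?(sum1_false (n:=b)) ?(sum1_true (n:=c)) ?addn0 ?add0n // => i; rewrite inE.
Qed.

Lemma eq_inl (A B : eqType) (x y : A) : (inl x == inl y :> A + B) = (x == y).
Proof. by []. Qed.
Lemma eq_inr (A B : eqType) (x y : B) : (inr x == inr y :> A + B) = (x == y).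
Proof. by []. Qed.

Definition e3 (l : seq algC) (c : 'I_3) : algC := nth 0 l c.
Definition bR (b : bool) : algC := b%:R.

Lemma mext_hA t1 t2 t3 (v w : vert (mixed_ext t1 t2 t3)) :
  (adj (mixed_ext t1 t2 t3) v w)%:R =
  m3 [:: [:: bR (0 < t1); 1; 0]; [:: 1; bR (0 < t2); 1]; [:: 0; 1; bR (0 < t3)]]
     (cellL v) (cellL w) - (v == w)%:R * e3 [:: bR (0 < t1); bR (0 < t2); bR (0 < t3)] (cellL v).
Proof.
case: v => [[i|i]|i]; case: w => [[j|j]|j]; rewrite /= mxE /= /bR /e3 /=.
all: rewrite ?mul0r ?subr0 //.
all: case: (eqVneq i j) => [->|hne]; rewrite ?eqxx ?andbF ?andbT ?mul1r ?subrr //.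
all: rewrite (_ : (_ == _) = false) ?mul0r ?subr0 //.
all: by apply/eqP => -[] // => /eqP; rewrite (negbTE hne).
Qed.

Lemma KCS_hA p a b (v w : vert (dunion (K p) (CS a b))) :
  (adj (dunion (K p) (CS a b)) v w)%:R =
  m3 [:: [:: 1; 0; 0]; [:: 0; 1; 1]; [:: 0; 1; 0]]
     (cellR v) (cellR w) - (v == w)%:R * e3 [:: 1; 1; 0] (cellR v).
Proof.
case: v => [i|[i|i]]; case: w => [j|[j|j]]; rewrite /= mxE /= /e3 /=.
all: rewrite ?mul0r ?mulr0 ?subr0 //.
all: rewrite ?eq_inr ?eq_inl /K_adj /=.
all: by case: eqP => _ /=; rewrite ?mulr1 ?subrr ?mul0r ?subr0.
Qed.

Lemma KKb_hA m a b (v w : vert (dunion (K m) (Kb a b))) :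
  (adj (dunion (K m) (Kb a b)) v w)%:R =
  m3 [:: [:: 1; 0; 0]; [:: 0; 0; 1]; [:: 0; 1; 0]]
     (cellR v) (cellR w) - (v == w)%:R * e3 [:: 1; 0; 0] (cellR v).
Proof.
case: v => [i|[i|i]]; case: w => [j|[j|j]]; rewrite /= mxE /= /e3 /=.
all: rewrite ?mul0r ?mulr0 ?subr0 //.
all: rewrite ?eq_inr ?eq_inl /K_adj /=.
all: by case: eqP => _ /=; rewrite ?mulr1 ?subrr ?mul0r ?subr0.
Qed.

Lemma prod3 (F : 'I_3 -> algC) : \prod_c F c = F 0 * F 1 * F 2.
Proof.
rewrite !big_ord_recl big_ord0 mulr1 mulrA.
by congr (_ * F _ * F _); apply: val_inj.
Qed.

Lemma eps01 (b1 b2 b3 : bool) c :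
  e3 [:: bR b1; bR b2; bR b3] c = 0 \/ e3 [:: bR b1; bR b2; bR b3] c = 1.
Proof.
case: c => [[|[|[|n]]] hc] //=; rewrite /e3 /=.
- by case: b1; [right|left].
- by case: b2; [right|left].
- by case: b3; [right|left].
Qed.

Lemma all3 (P : 'I_3 -> Prop) : P 0 -> P 1 -> P 2 -> forall c, P c.
Proof.
move=> h0 h1 h2 [[|[|[|n]]] hc] //.
- by rewrite (_ : Ordinal hc = 0) //; apply: val_inj.
- by rewrite (_ : Ordinal hc = 1) //; apply: val_inj.
- by rewrite (_ : Ordinal hc = 2) //; apply: val_inj.
Qed.

Lemma spec_i (p q : nat) (r1 r2 : algC) : (2 <= p)%N -> (1 <= q)%N ->
  r1 + r2 = p.-1%:R -> r1 * r2 = - (2 * p * q)%N%:R ->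
  spectrum (mixed_ext p%:Z (- q%:Z) p%:Z)
    (nseq (p.-1 + p.-1) (-1) ++ nseq q.-1 0 ++ [:: p.-1%:R; r1; r2]).
Proof.
move=> hp hq hs hm.
have [n0 n1 n2] := ncL p `|- q%:Z| p.
have hab : `|- q%:Z|%N = q by rewrite abszN.
apply: (spectrum_cells (@mext_hA _ _ _)).
- exact: eps01.
- by apply: all3; rewrite ?n0 ?n1 ?n2 ?hab; lia.
move=> x _.
have hP : (0 < p%:Z) = true by rewrite ltz_nat; lia.
have hQ : (0 < - q%:Z) = false by rewrite oppr_gt0 ltz_nat.
rewrite prod3 det33 mul_mx_diag /m3 /e3 !mxE /= !n0 !n1 !n2 hab hP hQ /bR /=.
rewrite !big_cat /= !prod_nseq !big_cons big_nil opprK subr0 mulr1.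
have hq2 : (x - r1) * (x - r2) = x ^+ 2 - p.-1%:R * x + r1 * r2 by rewrite -hs; ring.
rewrite hq2 hm exprD.
clear n0 n1 n2 hab hP hQ hs hm hq2.
case: p hp => [//|p] hp; case: q hq => [//|q] hq /=.
rewrite !addr0; move: ((x + 1) ^+ p) (x ^+ q) => A B.
ring.
Qed.

Lemma spec_mext_cl (p m : nat) (r1 r2 : algC) : (1 <= p)%N -> (1 <= m)%N ->
  r1 + r2 = (p.-1 + m.-1)%N%:R -> r1 * r2 = (p.-1 * m.-1)%N%:R - (2 * p * m)%N%:R ->
  spectrum (mixed_ext p%:Z m%:Z p%:Z)
    (nseq (p.-1 + m.-1 + p.-1) (-1) ++ nseq 0 0 ++ [:: p.-1%:R; r1; r2]).
Proof.
move=> hp hq hs hm.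
have [n0 n1 n2] := ncL p `|m%:Z| p.
apply: (spectrum_cells (@mext_hA _ _ _)).
- exact: eps01.
- by apply: all3; rewrite ?n0 ?n1 ?n2 /=; lia.
move=> x _.
have hP : (0 < p%:Z) = true by rewrite ltz_nat; lia.
have hQ : (0 < m%:Z) = true by rewrite ltz_nat; lia.
rewrite prod3 det33 mul_mx_diag /m3 /e3 !mxE /= !n0 !n1 !n2 hP hQ /bR /=.
rewrite !big_cat /= !prod_nseq !big_cons !big_nil opprK ?subr0 ?expr0 ?mul1r ?mulr1.
have hq2 : (x - r1) * (x - r2) = x ^+ 2 - (p.-1 + m.-1)%N%:R * x + r1 * r2 by rewrite -hs; ring.
rewrite hq2 hm !exprD.
clear n0 n1 n2 hP hQ hs hm hq2.
case: p hp => [//|p] hp; case: m hq => [//|m] hq /=.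
move: ((x + 1) ^+ p) ((x + 1) ^+ m) => A B.
ring.
Qed.

Lemma spec_KCS (p a b : nat) (r1 r2 : algC) : (1 <= p)%N -> (1 <= a)%N -> (1 <= b)%N ->
  r1 + r2 = a.-1%:R -> r1 * r2 = - (a * b)%N%:R ->
  spectrum (dunion (K p) (CS a b))
    (nseq (p.-1 + a.-1) (-1) ++ nseq b.-1 0 ++ [:: p.-1%:R; r1; r2]).
Proof.
move=> hp ha hb hs hm.
have [n0 n1 n2] := ncR p a b.
apply: (spectrum_cells (@KCS_hA _ _ _)).
- exact: (eps01 true true false).
- by apply: all3; rewrite ?n0 ?n1 ?n2 /=; lia.
move=> x _.
rewrite prod3 det33 mul_mx_diag /m3 /e3 !mxE /= !n0 !n1 !n2 /=.
rewrite !big_cat /= !prod_nseq !big_cons big_nil opprK subr0 mulr1.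
have hq2 : (x - r1) * (x - r2) = x ^+ 2 - a.-1%:R * x + r1 * r2 by rewrite -hs; ring.
rewrite hq2 hm !exprD.
clear n0 n1 n2 hs hm hq2.
case: p hp => [//|p] hp; case: a ha => [//|a] ha; case: b hb => [//|b] hb /=.
rewrite !addr0; move: ((x + 1) ^+ p) ((x + 1) ^+ a) (x ^+ b) => A B D.
ring.
Qed.

Lemma spec_KKb (N a : nat) : (1 <= N)%N -> (1 <= a)%N ->
  spectrum (dunion (K N) (Kb a a))
    (nseq N.-1 (-1) ++ nseq (a.-1 + a.-1) 0 ++ [:: a%:R; N.-1%:R; - a%:R]).
Proof.
move=> hN ha.
have [n0 n1 n2] := ncR N a a.
apply: (spectrum_cells (@KKb_hA _ _ _)).
- exact: (eps01 true false false).
- by apply: all3; rewrite ?n0 ?n1 ?n2 /=; lia.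
move=> x _.
rewrite prod3 det33 mul_mx_diag /m3 /e3 !mxE /= !n0 !n1 !n2 /=.
rewrite !big_cat /= !prod_nseq !big_cons big_nil opprK subr0 mulr1 !exprD.
clear n0 n1 n2.
case: N hN => [//|N] hN; case: a ha => [//|a] ha /=.
rewrite !addr0; move: ((x + 1) ^+ N) (x ^+ a) => A B.
ring.
Qed.

Lemma spec_KCS' (p a b c0 : nat) (r1 r2 : algC) : (1 <= p)%N -> (1 <= a)%N -> (1 <= b)%N ->
  c0 = (p.-1 + a.-1)%N ->
  r1 + r2 = a.-1%:R -> r1 * r2 = - (a * b)%N%:R ->
  spectrum (dunion (K p) (CS a b))
    (nseq c0 (-1) ++ nseq b.-1 0 ++ [:: p.-1%:R; r1; r2]).
Proof. by move=> ? ? ? -> ? ?; apply: spec_KCS. Qed.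

Lemma spec_KKb' (N a c0 : nat) (mu : algC) : (1 <= N)%N -> (1 <= a)%N ->
  c0 = N.-1 -> mu = a%:R ->
  spectrum (dunion (K N) (Kb a a))
    (nseq c0 (-1) ++ nseq (a.-1 + a.-1) 0 ++ [:: mu; N.-1%:R; - mu]).
Proof. by move=> ? ? -> ->; apply: spec_KKb. Qed.

Lemma K_nonisol n (i : 'I_n) : (1 < n)%N -> exists j : 'I_n, K_adj i j.
Proof.
move=> hn; have h0 : (0 < n)%N by lia.
case: (eqVneq (val i) 0) => hi.
- by exists (Ordinal hn); rewrite /K_adj; apply/eqP => /(congr1 val) /=; rewrite hi.
- by exists (Ordinal h0); rewrite /K_adj; apply/eqP => /(congr1 val) /=; apply/eqP.
Qed.

Lemma iso_card G H : isomorphic G H -> #|vert G| = #|vert H|.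
Proof. by case=> f [bf _]; apply: bij_eq_card bf. Qed.

Lemma noniso_mext t1 t2 t3 : (0 < `|t1|)%N -> (0 < `|t2|)%N ->
  forall x : vert (mixed_ext t1 t2 t3), exists y, adj _ x y.
Proof.
move=> h1 h2 [[i|i]|i].
- by exists (inl (inr (Ordinal h2))).
- by exists (inl (inl (Ordinal h1))).
- by exists (inl (inr (Ordinal h2))).
Qed.

Lemma noniso_KCS p a b : (1 < p)%N -> (0 < a)%N -> (0 < b)%N ->
  forall x : vert (dunion (K p) (CS a b)), exists y, adj _ x y.
Proof.
move=> hp ha hb [i|[i|i]].
- by have [j hj] := K_nonisol i hp; exists (inl j).
- by exists (inr (inr (Ordinal hb))).
- by exists (inr (inl (Ordinal ha))).
Qed.

Lemma noniso_KKb N a : (1 < N)%N -> (0 < a)%N ->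
  forall x : vert (dunion (K N) (Kb a a)), exists y, adj _ x y.
Proof.
move=> hN ha [i|[i|i]].
- by have [j hj] := K_nonisol i hN; exists (inl j).
- by exists (inr (inr (Ordinal ha))).
- by exists (inr (inl (Ordinal ha))).
Qed.

Lemma card_mext t1 t2 t3 : #|vert (mixed_ext t1 t2 t3)| = (`|t1| + `|t2| + `|t3|)%N.
Proof. by rewrite /= !card_sum !card_ord. Qed.
Lemma card_dunion G H : #|vert (dunion G H)| = (#|vert G| + #|vert H|)%N.
Proof. by rewrite /= card_sum. Qed.
Lemma card_K n : #|vert (K n)| = n. Proof. by rewrite /= card_ord. Qed.
Lemma card_CS a b : #|vert (CS a b)| = (a + b)%N. Proof. by rewrite /= card_sum !card_ord. Qed.
Lemma card_Kb a b : #|vert (Kb a b)| = (a + b)%N. Proof. by rewrite /= card_sum !card_ord. Qed.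

Theorem proposition2 :
  (* (i) *)
  (forall p q : nat, (2 <= p)%N -> (1 <= q)%N ->
     pseudo_cospectral (mixed_ext p%:Z (- q%:Z) p%:Z) (dunion (K p) (CS p (2 * q)))
     /\ ~ isomorphic (mixed_ext p%:Z (- q%:Z) p%:Z) (dunion (K p) (CS p (2 * q)))) /\
  (* (ii) *)
  (forall p : nat, (3 <= p)%N ->
     pseudo_cospectral (mixed_ext p%:Z ((p - 1) * (p - 2))%N%:Z p%:Z)
                       (dunion (K (p * (p - 1))) (Kb (p - 1) (p - 1)))
     /\ ~ isomorphic (mixed_ext p%:Z ((p - 1) * (p - 2))%N%:Z p%:Z)
                       (dunion (K (p * (p - 1))) (Kb (p - 1) (p - 1)))) /\
  (* (iii) *)
  (forall p q r : nat, (2 <= p)%N -> (1 <= q)%N ->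
     (r * (p + q - 1) = (p + q - 1) + p * q)%N ->
     pseudo_cospectral (mixed_ext p%:Z q%:Z p%:Z) (dunion (K p) (CS (p + q - 1) r))
     /\ ~ isomorphic (mixed_ext p%:Z q%:Z p%:Z) (dunion (K p) (CS (p + q - 1) r))).
Proof.
split; [|split].
- move=> p q hp hq; split; last first.
    move/iso_card; rewrite card_mext card_dunion card_K card_CS abszN /=; lia.
  have [r1 [r2 [hs hm hr1 hr2]]] := @quad_roots p.-1 (2 * p * q) ltac:(nia).
  apply: (pc_of (a := (p.-1 + p.-1)%N) (bG := q.-1) (bH := (2 * q).-1)
           (mu := p.-1%:R) (r1 := r1) (r2 := r2)).
  + by apply: noniso_mext; rewrite ?abszN /=; lia.
  + by apply: noniso_KCS; lia.
  + exact: spec_i.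
  + apply: spec_KCS' => //; try lia.
    by rewrite hm (_ : (p * (2 * q) = 2 * p * q)%N) //; lia.
  + by rewrite ltr0n; lia.
  + by [].
  + by [].
- case=> [|[|[|p]]] // hp.
  rewrite !subSS !subn0.
  have eN : ((p.+3 * p.+2).-1 = p * p + 5 * p + 5)%N by nia.
  have em : ((p.+2 * p.+1).-1 = p * p + 3 * p + 1)%N by nia.
  split; last first.
    move/iso_card; rewrite card_mext card_dunion card_K card_Kb /=; nia.
  apply: (pc_of (a := (p.+2 + (p.+2 * p.+1).-1 + p.+2)%N) (bG := 0) (bH := (p.+1 + p.+1)%N)
           (mu := p.+2%:R) (r1 := (p.+3 * p.+2).-1%:R) (r2 := - p.+2%:R)).
  + by apply: noniso_mext => /=; nia.
  + by apply: noniso_KKb; nia.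
  + apply: (spec_mext_cl (p := p.+3) (m := (p.+2 * p.+1)%N)) => //; try nia.
      by rewrite eN em /=; ring.
    by rewrite eN em /=; ring.
  + by apply: spec_KKb' => //; nia.
  + by rewrite ltr0n.
  + by rewrite eN ltr0n addnS.
  + by rewrite ltrN2 ltr1n.
- move=> p q r hp hq hr.
  case: p hp hr => [|[|p]] // hp hr; case: q hq hr => [|q] // hq hr.
  rewrite (_ : (p.+2 + q.+1 - 1 = p + q + 2)%N) in hr *; last by lia.
  have hr0 : (0 < r)%N by case: r hr => //=; nia.
  split; last first.
    move/iso_card; rewrite card_mext card_dunion card_K card_CS /=; nia.
  have [r1 [r2 [hs hm hr1 hr2]]] := @quad_roots (p.+1 + q) ((p + q + 2) * r) ltac:(nia).
  apply: (pc_of (a := (p.+1 + q + p.+1)%N) (bG := 0) (bH := r.-1)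
           (mu := p.+1%:R) (r1 := r1) (r2 := r2)).
  + by apply: noniso_mext => /=; nia.
  + by apply: noniso_KCS; nia.
  + apply: (spec_mext_cl (p := p.+2) (m := q.+1)) => //.
    by rewrite hm mulnC hr /=; ring.
  + apply: spec_KCS' => //; try nia.
    by rewrite hs (_ : ((p + q + 2).-1 = p.+1 + q)%N) //; lia.
  + by rewrite ltr0n.
  + by [].
  + by [].
Qed.
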